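(* Let $N$ be a natural number. For any two sets $A,B\subseteq{}^N2$, we have $A\subseteq B$ if and only if $\Delta(B)\preceq\Delta(A)$.
   Context: $N=\{0,\ldots,N-1\}$; ${}^N2$ is the set of all functions $N\to\{0,1\}$, and ${}^{\underline N}2$ is the set of all partial functions $\sigma$ with $\mathrm{dom}(\sigma)\subseteq N$ and values in $\{0,1\}$ (functions are sets of ordered pairs; the empty function is included). For $\sigma\in{}^{\underline N}2$, $[\sigma]=\{f\in{}^N2:\sigma\subseteq f\}$. For $A\subseteq{}^N2$, $\Delta(A)=\{\sigma\in{}^{\underline N}2: [\sigma]\cap A=\emptyset \text{ and } [\rho]\cap A\neq\emptyset \text{ for all } \rho\subsetneq\sigma\}$. For $\delta_1,\delta_2\subseteq{}^{\underline N}2$, $\delta_1\preceq\delta_2$ means that for every $\sigma\in\delta_1$ there is $\rho\in\delta_2$ with $\rho\subseteq\sigma$. *)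

(* Defs.v *)
From mathcomp Require Import all_boot.
Set Implicit Arguments. Unset Strict Implicit. Unset Printing Implicit Defensive.

(* ^N 2 : total functions N -> {0,1}; booleans encode {0,1}. *)
Definition tfun (N : nat) := {ffun 'I_N -> bool}.
(* ^{underline N} 2 : partial functions N -> {0,1}; [None] = undefined. *)
Definition pfun (N : nat) := {ffun 'I_N -> option bool}.

Definition psub N (s t : pfun N) : bool :=
  [forall i, if s i is Some b then t i == Some b else true].

Definition pssub N (r s : pfun N) : bool := psub r s && (r != s).

Definition ext N (s : pfun N) (f : tfun N) : bool :=
  [forall i, if s i is Some b then f i == b else true].

Definition Delta N (A : {set tfun N}) : {set pfun N} :=
  [set s | [forall f, ext s f ==> (f \notin A)] &&
           [forall r, pssub r s ==> [exists f, ext r f && (f \in A)]]].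

Definition prec N (d1 d2 : {set pfun N}) : Prop :=
  forall s, s \in d1 -> exists2 r, r \in d2 & psub r s.

(* Main.v *)
Require Import Defs.
From mathcomp Require Import all_boot.

Set Implicit Arguments. Unset Strict Implicit. Unset Printing Implicit Defensive.

Lemma psub_refl N (s : pfun N) : psub s s.
Proof. by apply/forallP => i; case: (s i). Qed.

Lemma psub_trans N (r s t : pfun N) : psub r s -> psub s t -> psub r t.
Proof.
move=> /forallP H1 /forallP H2; apply/forallP => i.
move: (H1 i) (H2 i); case: (r i) => // b /eqP ->; done.
Qed.

Lemma ext_psub N (r s : pfun N) f : psub r s -> ext s f -> ext r f.
Proof.
move=> /forallP H1 /forallP H2; apply/forallP => i.
move: (H1 i) (H2 i); case: (r i) => // b /eqP ->; done.
Qed.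

Definition dom N (s : pfun N) : {set 'I_N} := [set i | s i != None].

Lemma pssub_card N (r s : pfun N) : pssub r s -> #|dom r| < #|dom s|.
Proof.
case/andP=> /forallP H Hne.
have Hsub : dom r \subset dom s.
  apply/subsetP => i; rewrite !inE; move: (H i); case: (r i) => // b /eqP -> //.
case: (boolP (dom r \proper dom s)) => [/proper_card //|Hp].
exfalso; move/negP: Hne; apply; apply/eqP/ffunP => i.
have Hs' : dom s \subset dom r.
  by move: Hp; rewrite properE Hsub /= negbK.
move: (H i); case E: (r i) => [b|]; first by move/eqP.
move=> _; case E2: (s i) => [c|] //.
have : i \in dom s by rewrite inE E2.
by move/(subsetP Hs'); rewrite inE E.
Qed.

Local Notation disj A s := [forall f, ext s f ==> (f \notin A)].

Lemma core N (A : {set tfun N}) n : forall s : pfun N, #|dom s| <= n ->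
  disj A s -> exists2 r, r \in Delta A & psub r s.
Proof.
elim: n => [|n IH] s Hs Hd.
- exists s; last exact: psub_refl.
  rewrite inE Hd /=; apply/forallP => r; apply/implyP => /pssub_card.
  by move: Hs; case: #|dom s|.
- case: (boolP (s \in Delta A)) => Hin; first by exists s => //; exact: psub_refl.
  move: Hin; rewrite inE Hd /= => /forallPn [r]; rewrite negb_imply => /andP [Hr Hn].
  have Hd' : disj A r.
    apply/forallP => f; apply/implyP => He; apply/negP => Hf.
    by move/negP: Hn; apply; apply/existsP; exists f; rewrite He Hf.
  have Hc : #|dom r| <= n by rewrite -ltnS; exact: leq_trans (pssub_card Hr) Hs.
  have [q Hq1 Hq2] := IH r Hc Hd'.
  exists q => //; apply: psub_trans Hq2 _; by case/andP: Hr.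
Qed.

Definition tot N (f : tfun N) : pfun N := [ffun i => Some (f i)].

Lemma ext_tot N (f g : tfun N) : ext (tot f) g -> g = f.
Proof. by move/forallP => H; apply/ffunP => i; move: (H i); rewrite ffunE => /eqP. Qed.

Lemma psub_tot N (r : pfun N) f : psub r (tot f) -> ext r f.
Proof.
move=> /forallP H; apply/forallP => i; move: (H i); rewrite ffunE.
by case: (r i) => // b /eqP [->].
Qed.

Lemma core' N (A : {set tfun N}) s : disj A s -> exists2 r, r \in Delta A & psub r s.
Proof. exact: (@core N A #|dom s| s (leqnn _)). Qed.

Theorem theorem6p9 (N : nat) (A B : {set tfun N}) :
  A \subset B <-> prec (Delta B) (Delta A).
Proof.
split.
- move=> HAB s; rewrite inE => /andP [Hd _].
  apply: core'; apply/forallP => f; apply/implyP => He.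
  move/forallP: Hd => /(_ f); rewrite He /= => Hf.
  by apply/negP => /(subsetP HAB); apply/negP.
- move=> Hp; apply/subsetP => f HfA; apply/negPn/negP => HfB.
  have Hd : disj B (tot f).
    by apply/forallP => g; apply/implyP => /ext_tot ->.
  have [s Hs Hsf] := core' Hd.
  have [r Hr Hrs] := Hp s Hs.
  move: Hr; rewrite inE => /andP [/forallP /(_ f) Hr _].
  have : ext r f by apply: psub_tot; apply: psub_trans Hrs Hsf.
  by move=> He; move: Hr; rewrite He HfA.
Qed.
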